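(* Let $\mathcal X=\mathcal H$ or $\mathcal E$, $T,L>0$, and suppose that $\{X^\epsilon\}$ satisfies a moderate deviation principle with action functional $\mathcal S_{x,T}$ and that $E=\{\phi\in C([0,T];\mathcal H):\tau_\phi\le T\}$ is an $\mathcal S_{x^*,T}$-continuity set. Then any unbiased estimator $\hat P(\epsilon)$ of $P(\epsilon)=\mathbb P[\tau^\epsilon\le T]$, defined on a probability space $(\Omega,\mathscr F,\bar{\mathbb P})$, satisfies $$\limsup_{\epsilon\to0}-\frac1{h^2(\epsilon)}\log\bar{\mathbb E}[\hat P(\epsilon)^2]\le2G_T(0,0),\qquad G_T(0,0):=\inf\{\mathcal S_{x^*,T}(\phi):\phi\in C([0,T];\mathcal X),\ \phi(0)=0,\ \tau_\phi=T\}.$$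
   Context: Setting: $\ell>0$, $\mathcal H=L^2(0,\ell)$, $\mathcal E$ a space of continuous functions on $[0,\ell]$ satisfying given boundary conditions, with sup norm. $A$ is a uniformly elliptic second-order differential operator on $(0,\ell)$ with these boundary conditions, $F$ a superposition operator $F(x)(\xi)=f(x(\xi))$, $W$ a cylindrical Wiener process on $\mathcal H$, and for $\epsilon>0$, $x\in\mathcal X$, $X^\epsilon_x$ is the mild solution of $dX=[AX+F(X)]dt+\sqrt\epsilon dW$, $X(0)=x$; $X^0_x$ is the solution with $\epsilon=0$. $x^*$ is an equilibrium ($Ax^*+F(x^* )=0$), $X^\epsilon=X^\epsilon_{x^*}$ in $P(\epsilon)$. $h(\epsilon)\to\infty$, $\sqrt\epsilon h(\epsilon)\to0$. $\eta^\epsilon_x=(X^\epsilon_x-X^0_x)/(\sqrt\epsilon h(\epsilon))$; $\tau^\epsilon=\inf\{t>0:\|\eta^\epsilon_{x^*}(t)\|_{\mathcal H}\ge L\}$. For a path $\phi$, $\tau_\phi=\inf\{t>0:\phi(t)\notin\mathring B_{\mathcal H}(0,L)\}$ (exit time from the open ball of radius $L$). Moderate deviation principle: given functionals $\mathcal S_{x,T}:C([0,T];\mathcal X)\to[0,\infty]$ with compact sub-level sets, $\{X^\epsilon\}$ satisfies an MDP with action functional $\mathcal S_{x,T}$ if for every bounded continuous $g:C([0,T];\mathcal X)\to\mathbb R$, $\lim_{\epsilon\to0}\frac1{h^2(\epsilon)}\log\mathbb Ee^{-h^2(\epsilon)g(\eta^\epsilon_x)}=-\inf_{\phi(0)=0}[\mathcal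 S_{x,T}(\phi)+g(\phi)]$. A Borel set $E$ is an $\mathcal S_{x,T}$-continuity set if $\inf_{\bar E}\mathcal S_{x,T}=\inf_{\mathring E}\mathcal S_{x,T}$. An unbiased estimator of $P(\epsilon)$ is a random variable $\hat P(\epsilon)$ with $\bar{\mathbb E}[\hat P(\epsilon)]=P(\epsilon)$. *)

(* Defs.v *)
From HB Require Import structures.
From mathcomp Require Import all_boot all_order all_algebra.
From mathcomp Require Import all_classical all_reals all_analysis.
Set Implicit Arguments. Unset Strict Implicit. Unset Printing Implicit Defensive.
Import Order.TTheory GRing.Theory Num.Def Num.Theory.
Import numFieldNormedType.Exports.
Local Open Scope classical_set_scope.
Local Open Scope ring_scope.

Section Defs.
Variables (R : realType) (X : normedModType R).

Definition Cpath (T : R) : set (R -> X) :=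
  [set phi | {within `[0, T], continuous phi}].

Definition supclose (T d : R) (phi psi : R -> X) : Prop :=
  forall t, t \in `[0, T] -> `|phi t - psi t| <= d.

Definition Copen (T : R) (A : set (R -> X)) : Prop :=
  A `<=` Cpath T /\
  forall phi, A phi -> exists2 d : R, 0 < d &
    forall psi, Cpath T psi -> supclose T d phi psi -> A psi.

Definition Cclosure (T : R) (A : set (R -> X)) : set (R -> X) :=
  [set phi | Cpath T phi /\
     forall d : R, 0 < d -> exists2 psi, A psi & supclose T d phi psi].

Definition Cinterior (T : R) (A : set (R -> X)) : set (R -> X) :=
  [set phi | A phi /\ Cpath T phi /\ exists2 d : R, 0 < d &
     forall psi, Cpath T psi -> supclose T d phi psi -> A psi].

Definition bdd_cont_functional (T : R) (g : (R -> X) -> R) : Prop :=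
  (exists M : R, forall phi, Cpath T phi -> `|g phi| <= M) /\
  forall phi, Cpath T phi -> forall e : R, 0 < e -> exists2 d : R, 0 < d &
    forall psi, Cpath T psi -> supclose T d phi psi -> `|g phi - g psi| <= e.

(* a functional with values in [0,+oo] and compact sub-level sets in C([0,T];X)
   (compactness = sequential compactness in the sup-norm metric) *)
Definition good_rate (T : R) (S : (R -> X) -> \bar R) : Prop :=
  (forall phi, (0 <= S phi)%E) /\
  forall a : R, forall u : nat -> (R -> X),
    (forall n, Cpath T (u n) /\ (S (u n) <= a%:E)%E) ->
    exists sigma : nat -> nat, (forall n, (sigma n < sigma n.+1)%N) /\
    exists phi, Cpath T phi /\ (S phi <= a%:E)%E /\
      forall e : R, 0 < e -> \forall n \near \oo, supclose T e (u (sigma n)) phi.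

(* exit time from the open H-ball of radius L, restricted to the time interval
   (0,T]: inf { t in (0,T] : |phi t|_H >= L }, with inf of the empty set = +oo *)
Definition exit_time (nH : X -> R) (T L : R) (phi : R -> X) : \bar R :=
  ereal_inf [set t%:E | t in [set t | t \in `]0, T] /\ L <= nH (phi t)]].

Definition continuity_set (T : R) (S : (R -> X) -> \bar R) (E : set (R -> X)) :=
  ereal_inf (S @` (Cclosure T E `&` [set phi | phi 0 = 0])) =
  ereal_inf (S @` (Cinterior T E `&` [set phi | phi 0 = 0])).

End Defs.

Definition elog (R : realType) (x : \bar R) : \bar R :=
  match x with
  | r%:E => if (0 < r)%R then (ln r)%:E else -oo
  | +oo => +oo
  | -oo => -oo
  end%E.

(* the rescaled fluctuation eta^eps = (X^eps - X^0)/(sqrt eps h(eps)), with X^0 = x* *)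
Definition eta_of (R : realType) (X : normedModType R) (Omega : Type)
  (h : R -> R) (Xe : R -> Omega -> R -> X) (xstar : X) (eps : R) (w : Omega)
  : R -> X :=
  fun t => (Num.sqrt eps * h eps)^-1 *: (Xe eps w t - xstar).

(* moderate deviation principle (Laplace form) for {X^eps} started at x*,
   with action functional S on C([0,T];X) *)
Definition MDP (R : realType) (X : normedModType R) (d : measure_display)
  (Omega : measurableType d) (P : probability Omega R) (h : R -> R)
  (Xe : R -> Omega -> R -> X) (xstar : X) (T : R) (S : (R -> X) -> \bar R) : Prop :=
  good_rate T S /\
  forall g : (R -> X) -> R, bdd_cont_functional T g ->
    (fun eps => ((h eps ^- 2)%:E *
       elog (\int[P]_w (expR (- (h eps ^+ 2 * g (eta_of h Xe xstar eps w))))%:E))%E)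
    @ 0^'+ -->
    (- ereal_inf [set (S phi + (g phi)%:E)%E | phi in
                   [set phi | Cpath T phi /\ phi 0%R = 0%R]])%E.

(* Main.v *)
Require Import Defs.
From HB Require Import structures.
From mathcomp Require Import all_boot all_order all_algebra.
From mathcomp Require Import all_classical all_reals all_analysis.
From mathcomp Require Import lra ring.
Import Order.TTheory GRing.Theory Num.Def Num.Theory.
Import numFieldNormedType.Exports.
Local Open Scope classical_set_scope.
Local Open Scope ring_scope.

Section PartA.
Variables (R : realType) (X : normedModType R) (nH : X -> R) (T L : R).

Lemma exit_leP (phi : R -> X) :
  (exit_time nH T L phi <= T%:E)%E <-> exists t, t \in `]0, T] /\ L <= nH (phi t).
Proof.
split.
- move=> H; apply: contrapT => Hn; move: H; rewrite /exit_time.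
  suff -> : [set t%:E | t in [set t | t \in `]0, T] /\ L <= nH (phi t)]] = set0.
    by rewrite ereal_inf0 leNgt ltey.
  by apply/seteqP; split => // x [t Ht _]; apply: Hn; exists t.
- move=> [t [Ht1 Ht2]]; rewrite /exit_time; apply: ge_ereal_inf.
  exists t%:E; first by exists t.
  by rewrite lee_fin; move: Ht1; rewrite in_itv /= => /andP[].
Qed.

Definition Gset (n m : nat) : set (R -> X) :=
  [set phi | Cpath T phi /\ exists t, t \in `[(n.+1%:R)^-1, T] /\
      L - (m.+1%:R)^-1 < nH (phi t)].

Lemma Gset_open n m : continuous nH -> Copen T (Gset n m).
Proof.
move=> cnH; split; first by move=> phi [].
move=> phi [Cphi [t [Ht Hlt]]].
have := cnH (phi t); move/cvgrPdist_lt.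
move=> /(_ (nH (phi t) - (L - (m.+1%:R)^-1))); rewrite subr_gt0 => /(_ Hlt).
move/nbhs_ballP => [e e0 He].
exists (e / 2); first by rewrite divr_gt0.
move=> psi Cpsi Hcl; split => //; exists t; split => //.
have t0 : t \in `[0, T].
  move: Ht; rewrite !in_itv /= => /andP[H1 ->]; rewrite andbT.
  apply: le_trans H1; by rewrite invr_ge0.
have := He (psi t).
have Hb : ball (phi t) e (psi t).
  rewrite -ball_normE /ball_ /=.
  by apply: (le_lt_trans (Hcl t t0)); rewrite gtr_pMr // ?invf_lt1 // ?ltr1n.
move=> /(_ Hb) /=.
move=> H.
have Hn := ler_norm (nH (phi t) - nH (psi t)); move: (le_lt_trans Hn H); set a := nH (phi t); set b := nH (psi t); set c := L - _; move=> Ha; lra.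
Qed.

Lemma small_inv {e : R} : 0 < e -> exists n : nat, n.+1%:R^-1 < e.
Proof.
move=> e0; exists (Num.truncn e^-1).
rewrite -[e in _ < e]invrK ltf_pV2 ?posrE ?invr_gt0 ?ltr0n //.
exact: truncnS_gt.
Qed.

Lemma Gset_char {phi : R -> X} : continuous nH -> Cpath T phi ->
  (exists t, t \in `]0, T] /\ L <= nH (phi t)) <-> exists n, forall m, Gset n m phi.
Proof.
move=> cnH Cphi; split.
- move=> [t [Ht HL]].
  have t0 : 0 < t by move: Ht; rewrite in_itv /= => /andP[].
  have [n Hn] := small_inv t0.
  exists n => m; split => //; exists t; split.
    by move: Ht; rewrite !in_itv /= => /andP[_ ->]; rewrite (ltW Hn).
  apply: lt_le_trans HL; by rewrite gtrBl invr_gt0 ltr0n.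
- move=> [n Hn].
  have [_ [t0 [Ht0 _]]] := Hn 0%N.
  have aT : (n.+1%:R^-1 : R) <= T.
    by move: Ht0; rewrite in_itv /= => /andP[H1 H2]; apply: le_trans H2.
  have a0 : (0 : R) < n.+1%:R^-1 by rewrite invr_gt0 ltr0n.
  have cf : {within `[n.+1%:R^-1, T], continuous (nH \o phi)}.
    apply: within_continuous_comp; first by move=> y _; exact: cnH.
    apply: continuous_subspaceW Cphi.
    by apply: subset_itvScc => //; rewrite bnd_simp ltW.
  have [c Hc Hmax] := EVT_max aT cf.
  exists c; split.
    by move: Hc; rewrite !in_itv /= => /andP[H1 ->]; rewrite (lt_le_trans a0 H1).
  rewrite leNgt; apply/negP => Hlt.
  have [m Hm] : exists m : nat, m.+1%:R^-1 < L - nH (phi c) by apply: small_inv; rewrite subr_gt0.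
  have [_ [t [Ht Hlt2]]] := Hn m.
  have := Hmax t Ht; rewrite /= => Hle.
  move: (lt_le_trans Hlt2 Hle) => H3.
  set a := nH (phi c) in Hlt Hm H3 Hle; set b := m.+1%:R^-1 in Hm H3; lra.
Qed.

Lemma E_meas d (Omega : measurableType d) (eta : Omega -> R -> X) :
  continuous nH -> (forall w, Cpath T (eta w)) ->
  (forall A, Copen T A -> measurable [set w | A (eta w)]) ->
  measurable [set w | Cpath T (eta w) /\ (exit_time nH T L (eta w) <= T%:E)%E].
Proof.
move=> cnH Ceta Hm.
have -> : [set w | Cpath T (eta w) /\ (exit_time nH T L (eta w) <= T%:E)%E] =
    \bigcup_n \bigcap_m [set w | Gset n m (eta w)].
  apply/seteqP; split => w /=.
  - move=> [Cw /exit_leP /(Gset_char cnH Cw) [n Hn]].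
    by exists n => // m _; exact: Hn.
  - move=> [n _ Hn]; split => //; apply/exit_leP/(Gset_char cnH (Ceta w)).
    by exists n => m; exact: Hn.
apply: bigcupT_measurable => n; apply: bigcapT_measurable => m.
by apply: Hm; exact: Gset_open.
Qed.
End PartA.
Arguments E_meas {R X nH T L d Omega eta}.


Lemma sq_le_int (R : realType) d (Omega : measurableType d) (P : probability Omega R)
  (Y : {RV P >-> R}) : P.-integrable setT (EFin \o Y) ->
  ((\int[P]_w (Y w)%:E) ^+ 2 <= \int[P]_w ((Y w) ^+ 2)%:E)%E.
Proof.
move=> iY.
have fin := integrable_fin_num measurableT iY.
set m := fine (\int[P]_w (Y w)%:E)%E.
have Em : (\int[P]_w (Y w)%:E)%E = m%:E by rewrite /m fineK.
have mY : measurable_fun setT Y by [].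
have mY2 : measurable_fun setT (fun w => (Y w) ^+ 2) by exact: measurable_realfun.measurable_funX.
have [->|] := eqVneq (\int[P]_w ((Y w) ^+ 2)%:E)%E +oo%E; first by rewrite leey.
move=> Hn.
have iY2 : P.-integrable setT (EFin \o (fun w => (Y w) ^+ 2)).
  apply/integrableP; split; first exact/measurable_realfun.measurable_EFinP.
  under eq_integral => w _ do rewrite /= ger0_norm ?sqr_ge0 //.
  rewrite ltNge leye_eq; exact: Hn.
have i1 : P.-integrable setT (EFin \o (fun w => (2 * m) * Y w)).
  have := integrableZl measurableT (2 * m) iY.
  by apply: eq_integrable => // w _ /=; rewrite EFinM.
have i2 : P.-integrable setT (EFin \o (fun w : Omega => m ^+ 2)).
  exact: finite_measure_integrable_cst.
have i12 : P.-integrable setT (EFin \o (fun w => (2 * m) * Y w - m ^+ 2)).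
  have := integrableB measurableT i1 i2.
  by apply: eq_integrable => // w _ /=; rewrite EFinB.
have := le_integral measurableT i12 iY2.
have Hpt : {in setT, forall w, ((EFin \o (fun w => ((2 * m) * Y w - m ^+ 2)%R)) w <=
    (EFin \o (fun w => ((Y w) ^+ 2)%R)) w)%E}.
  move=> w _ /=; rewrite lee_fin.
  have := sqr_ge0 (Y w - m); set y := Y w; move=> H; nra.
move=> /(_ Hpt) /=.
have -> : (\int[P]_w ((2 * m * Y w - m ^+ 2)%:E))%E = (m ^+ 2)%:E.
  under eq_integral => w _ do rewrite EFinB.
  rewrite integralB_EFin //.
  under eq_integral => w _ do rewrite EFinM.
  rewrite integralZl // Em.
  have -> : (\int[P]_(w in setT) (m ^+ 2)%:E)%E = (m ^+ 2)%:E.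
    rewrite integral_cst // -[X in _ = X]mule1; congr (_ * _)%E.
    exact: probability_setT.
  by rewrite -EFinM -EFinB; congr EFin; ring.
by rewrite Em -EFinM expr2.
Qed.

Arguments sq_le_int {R d Omega P} Y.

Lemma minlip (R : realType) (c a b : R) : Num.min c a <= Num.min c b + `|a - b|.
Proof.
have h1 := ler_norm (a - b); have h2 := ler_norm (b - a); rewrite distrC in h2.
rewrite /Num.min; case: ifP => H1; case: ifP => H2; lra.
Qed.

Section PartF.
Variables (R : realType) (X : normedModType R) (T : R) (phi0 : R -> X) (dl : R).
Hypotheses (T0 : 0 <= T) (dl0 : 0 < dl).

Definition Dset (psi : R -> X) : set R :=
  [set Num.min dl `|phi0 t - psi t| | t in [set t | t \in `[0, T]]].
Definition Dsup psi := sup (Dset psi).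

Lemma Dset_n0 psi : Dset psi !=set0.
Proof. by exists (Num.min dl `|phi0 0 - psi 0|); exists 0 => //=; rewrite in_itv /= lexx. Qed.

Lemma Dset_ub psi : ubound (Dset psi) dl.
Proof. by move=> _ [t _ <-]; rewrite ge_min lexx. Qed.

Lemma Dset_hub psi : has_ubound (Dset psi).
Proof. by exists dl; exact: Dset_ub. Qed.

Lemma Dsup_le psi : Dsup psi <= dl.
Proof. exact: ge_sup (Dset_n0 psi) (Dset_ub psi). Qed.

Lemma Dsup_elem psi t : t \in `[0, T] -> Num.min dl `|phi0 t - psi t| <= Dsup psi.
Proof. by move=> Ht; apply: ub_le_sup (Dset_hub psi) _ _; exists t. Qed.

Lemma Dsup_ge0 psi : 0 <= Dsup psi.
Proof.
apply: le_trans (Dsup_elem psi 0 _); last by rewrite in_itv /= lexx.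
by rewrite le_min (ltW dl0) normr_ge0.
Qed.

Lemma Dsup_phi0 : Dsup phi0 = 0.
Proof.
apply/eqP; rewrite eq_le Dsup_ge0 andbT; apply: ge_sup (Dset_n0 phi0) _.
by move=> _ [t _ <-]; rewrite subrr normr0 ge_min lexx orbT.
Qed.

Lemma Dsup_far psi : ~ supclose T dl phi0 psi -> Dsup psi = dl.
Proof.
move=> Hn; apply/eqP; rewrite eq_le Dsup_le /=.
have [t Ht] : exists t, ~ (t \in `[0, T] -> `|phi0 t - psi t| <= dl).
  apply: contrapT => H; apply: Hn => t Ht; apply: contrapT => H2; apply: H.
  by exists t => H3; apply: H2; exact: H3 Ht.
have [Ht1 Ht2] : t \in `[0, T] /\ ~ `|phi0 t - psi t| <= dl.
  split; first by apply: contrapT => H; apply: Ht => /H.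
  by move=> H; apply: Ht.
apply: le_trans (Dsup_elem psi t Ht1).
rewrite le_min lexx /=; move/negP: Ht2; rewrite -ltNge => /ltW //.
Qed.

Lemma Dsup_lip {psi psi' : R -> X} {e : R} : supclose T e psi psi' -> Dsup psi <= Dsup psi' + e.
Proof.
move=> Hc; apply: ge_sup (Dset_n0 psi) _ => _ [t Ht <-].
apply: le_trans (minlip _ dl _ `|phi0 t - psi' t|) _.
apply: lerD; first exact: Dsup_elem.
apply: le_trans (ler_dist_dist _ _) _.
have -> : phi0 t - psi t - (phi0 t - psi' t) = psi' t - psi t.
  by rewrite opprB addrC addrA subrK.
by rewrite distrC; exact: Hc.
Qed.

Lemma supclose_sym {e : R} {psi psi' : R -> X} : supclose T e psi psi' -> supclose T e psi' psi.
Proof. by move=> H t Ht; rewrite distrC; exact: H. Qed.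

Definition gfun (M : R) psi := M / dl * Dsup psi.

Lemma gfun_ge0 M psi : 0 <= M -> 0 <= gfun M psi.
Proof. by move=> M0; rewrite /gfun mulr_ge0 ?divr_ge0 ?(ltW dl0) ?Dsup_ge0. Qed.

Lemma gfun_le M psi : 0 <= M -> gfun M psi <= M.
Proof.
move=> M0; rewrite /gfun -{2}(mulr1 M) -mulrA ler_wpM2l //.
by rewrite ler_pdivrMl // mulr1 Dsup_le.
Qed.

Lemma gfun_phi0 M : gfun M phi0 = 0.
Proof. by rewrite /gfun Dsup_phi0 mulr0. Qed.

Lemma gfun_far M psi : ~ supclose T dl phi0 psi -> gfun M psi = M.
Proof.
move=> H; rewrite /gfun Dsup_far // -mulrA mulVf ?mulr1 //.
by rewrite gt_eqF.
Qed.

Lemma gfun_bdd M : 0 < M -> bdd_cont_functional T (gfun M).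
Proof.
move=> M0; split.
  by exists M => phi _; rewrite ger0_norm ?gfun_ge0 ?gfun_le ?ltW.
move=> phi _ e e0; exists (e * dl / M).
  by rewrite divr_gt0 // mulr_gt0.
move=> psi _ Hc.
have H1 := Dsup_lip Hc; have H2 := Dsup_lip (supclose_sym Hc).
rewrite /gfun -mulrBr normrM ger0_norm ?divr_ge0 ?(ltW dl0) ?(ltW M0) //.
have Hab : `|Dsup phi - Dsup psi| <= e * dl / M.
  rewrite ler_norml; apply/andP; split; lra.
apply: le_trans (ler_wpM2l _ Hab) _; first by rewrite divr_ge0 ?(ltW dl0) ?(ltW M0).
rewrite le_eqVlt; apply/orP; left; apply/eqP.
by field; apply/andP; split; rewrite gt_eqF.
Qed.
End PartF.
Arguments gfun_bdd {R X T phi0 dl}.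
Arguments gfun_phi0 {R X T phi0 dl}.
Arguments gfun_far {R X T phi0 dl}.
Arguments gfun_ge0 {R X T phi0 dl}.
Arguments gfun_le {R X T phi0 dl}.



Lemma ge0_le_integral_nm (R : realType) d (Om : measurableType d)
  (mu : {measure set Om -> \bar R}) (f1 f2 : Om -> \bar R) :
  (forall x, (0 <= f1 x)%E) -> (forall x, (f1 x <= f2 x)%E) ->
  (\int[mu]_x f1 x <= \int[mu]_x f2 x)%E.
Proof.
move=> f10 f12.
have f20 : forall x, (0 <= f2 x)%E by move=> x; exact: le_trans (f10 x) (f12 x).
rewrite (ge0_integralE _ (fun x _ => f10 x)) (ge0_integralE _ (fun x _ => f20 x)).
rewrite !patch_setT; apply: ereal_sup_le => _ [h Hh <-]; exists h => //.
by move=> x; apply: le_trans (Hh x) (f12 x).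
Qed.

Theorem lemma3p2 (R : realType) (X : normedModType R) (nH : X -> R)
  (d : measure_display) (Omega : measurableType d) (P : probability Omega R)
  (d' : measure_display) (Omega' : measurableType d') (Pbar : probability Omega' R)
  (h : R -> R) (Xe : R -> Omega -> R -> X) (xstar : X) (T L : R)
  (S : (R -> X) -> \bar R) (Phat : R -> {RV Pbar >-> R}) :
  continuous nH ->
  0 < T -> 0 < L ->
  h x @[x --> 0^'+] --> +oo ->
  Num.sqrt x * h x @[x --> 0^'+] --> 0 ->
  (forall eps, 0 < eps -> forall w, Cpath T (eta_of h Xe xstar eps w)) ->
  (forall eps, 0 < eps -> forall A, Copen T A ->
     measurable [set w | A (eta_of h Xe xstar eps w)]) ->
  MDP P h Xe xstar T S ->
  continuity_set T S [set phi | Cpath T phi /\ (exit_time nH T L phi <= T%:E)%E] ->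
  (forall eps, 0 < eps ->
     Pbar.-integrable setT (EFin \o Phat eps) /\
     ('E_Pbar[Phat eps] =
       P [set w | (exit_time nH T L (eta_of h Xe xstar eps w) <= T%:E)%E])%E) ->
  (limf_esup
     (fun eps => - ((h eps ^- 2)%:E * elog (\int[Pbar]_w ((Phat eps w) ^+ 2)%:E)))
     0^'+
   <= 2%:E * ereal_inf [set S phi | phi in
        [set phi | Cpath T phi /\ phi 0%R = 0%R /\ exit_time nH T L phi = T%:E]])%E.
Proof.
move=> cnH T0 L0 hoo _ Ceta Meta [[S0 _] mdp] cont Hhat.
set E := [set phi | Cpath T phi /\ (exit_time nH T L phi <= T%:E)%E].
set A0 := [set phi | Cpath T phi /\ phi 0%R = 0%R /\ exit_time nH T L phi = T%:E].
set G := ereal_inf [set S phi | phi in A0].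
set F := (fun eps => - ((h eps ^- 2)%:E * elog (\int[Pbar]_w ((Phat eps w) ^+ 2)%:E)))%E.
have G0 : (0 <= G)%E by apply: le_ereal_inf_tmp => _ [phi _ <-]; exact: S0.
suff claim : forall r : R, (G < r%:E)%E -> (limf_esup F 0^'+ <= (2 * r)%:E)%E.
  have [->|Gfin] := eqVneq G +oo%E; first by rewrite muleC gt0_mulye ?lte_fin // leey.
  have Gf : G \is a fin_num by rewrite fin_numE Gfin andbT; apply: contraTneq G0 => ->.
  rewrite -(fineK Gf); apply/lee_addgt0Pr => e e0.
  have := claim (fine G + e / 2).
  rewrite -{1}(fineK Gf) lte_fin ltrDl divr_gt0 // => /(_ isT).
  by rewrite -EFinM -EFinD mulrDr; congr (_ <= _%:E)%E; field.
move=> r Gr.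
have Hsub : [set S phi | phi in A0] `<=`
    S @` (Cclosure T E `&` [set phi | phi 0 = 0]).
  move=> _ [phi [Cphi [phi00 ex]] <-]; exists phi => //; split => //; split => //.
  move=> dd dd0; exists phi.
    by split => //; rewrite ex.
  by move=> t _; rewrite subrr normr0 ltW.
have Hint := ereal_inf_le_tmp Hsub.
rewrite /continuity_set in cont; rewrite cont in Hint.
have [y [phi0 [[Ephi0 [Cphi0 [dl dl0 Hball]]] phi00] <-] Hy] :=
  ereal_inf_lt (le_lt_trans Hint Gr).
have Sfin : S phi0 \is a fin_num.
  by rewrite fin_numE; apply/andP; split; [apply: contraTneq (S0 phi0) => -> | rewrite (lt_eqF (lt_trans Hy (ltry _)))].
set s := fine (S phi0).
have Ss : S phi0 = s%:E by rewrite /s fineK.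
have sr : s < r by rewrite -lte_fin -Ss.
have s0 : 0 <= s by rewrite -lee_fin -Ss.
set et := (r - s) / 4.
have et0 : 0 < et by rewrite divr_gt0 // subr_gt0.
set M := s + et + 1.
have M0 : 0 < M by rewrite /M; lra.
set g := gfun _ _ T phi0 dl M.
have gbdd : bdd_cont_functional T g := gfun_bdd (ltW T0) dl0 M M0.
have := mdp g gbdd.
set l := (- ereal_inf _)%E => Hcv.
have Hl : ((- s - et)%:E < l)%E.
  rewrite /l; have : (ereal_inf [set (S phi + (g phi)%:E)%E | phi in
                   [set phi | Cpath T phi /\ phi 0%R = 0%R]] <= s%:E)%E.
    apply: ge_ereal_inf; exists (S phi0 + (g phi0)%:E)%E.
      by exists phi0.
    by rewrite /g (gfun_phi0 (ltW T0) dl0) adde0 Ss.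
  move=> Hle; apply: (@lt_le_trans _ _ (- s%:E)%E); last by rewrite leeN2.
  rewrite -EFinN lte_fin; lra.
have HF := Hcv _ (open_ereal_gt' Hl).
have /cvgryPgt Hh := hoo.
have ln2 : ln (2 : R) <= 1.
  have H1 : (-1 : R) < 1 by rewrite (lt_trans (ltrN10 _) ltr01).
  by have := @le_ln1Dx R 1 H1; rewrite (_ : 1 + 1 = 2) //.
suff Hev : \forall eps \near 0^'+, (F eps <= (2 * r)%:E)%E.
  rewrite limf_esupE; apply: ge_ereal_inf.
  exists (ereal_sup [set F x | x in [set eps | (F eps <= (2 * r)%:E)%E]]).
    by exists [set eps | (F eps <= (2 * r)%:E)%E].
  by apply: ge_ereal_sup => _ [x Hx <-].
near=> eps.
have eps0 : 0 < eps by near: eps; exact: nbhs_right_gt.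
have hb : 1 + et^-1 < h eps by near: eps; exact: Hh.
have Fe : ((- s - et)%:E < (h eps ^- 2)%:E * elog (\int[P]_w
    (expR (- (h eps ^+ 2 * g (eta_of h Xe xstar eps w))))%:E))%E.
  by near: eps; exact: HF.
move: Fe; set q := h eps ^+ 2 => Fe.
have h0 : 0 < h eps by apply: lt_trans hb; rewrite ltr_pwDr ?invr_gt0.
have h1 : 1 < h eps by apply: le_lt_trans hb; rewrite lerDl invr_ge0 ltW.
have q1 : 1 < q by rewrite /q expr2; nra.
have qet : 1 < et * q.
  have : et^-1 < q by rewrite /q expr2; nra.
  by move=> H; rewrite -(mulfV (lt0r_neq0 et0)) ltr_pM2l.
have q0 : 0 < q by lra.
set Ee := [set w | E (eta_of h Xe xstar eps w)].
have mE : measurable Ee := E_meas cnH (Ceta eps eps0) (Meta eps eps0).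
have pfin : P Ee \is a fin_num by apply: fin_num_measure.
set p := fine (P Ee).
have pE : P Ee = p%:E by rewrite /p fineK.
have p0 : 0 <= p by rewrite -lee_fin -pE measure_ge0.
set b := expR (- (q * M)).
have b0 : 0 < b by apply: expR_gt0.
set I := (\int[P]_w (expR (- (q * g (eta_of h Xe xstar eps w))))%:E)%E.
have Ib : (I <= (p + b)%:E)%E.
  apply: (le_trans (@ge0_le_integral_nm _ _ _ P _ (fun w => (\1_Ee w + b)%:E) _ _)).
  - by move=> w; rewrite lee_fin expR_ge0.
  - move=> w; rewrite lee_fin indicE.
    have gw0 : 0 <= q * g (eta_of h Xe xstar eps w).
      by rewrite mulr_ge0 ?(ltW q0) // (gfun_ge0 (ltW T0) dl0) // ltW.
    case: (pselect (Ee w)) => Hw.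
      rewrite mem_set //; apply: le_trans (_ : 1 <= 1 + b); last by rewrite lerDl ltW.
      by rewrite expR_le1 oppr_le0.
    rewrite memNset // add0r /g (gfun_far (ltW T0) dl0) //.
    by move=> Hc; apply: Hw; apply: Hball => //; exact: Ceta.
  under eq_integral => w _ do rewrite EFinD.
  rewrite ge0_integralD //; try (by move=> w _; rewrite lee_fin ltW);
    try (by apply/measurable_realfun.measurable_EFinP; exact: measurable_realfun.measurable_indic);
    try (by move=> w _; rewrite lee_fin indicE; case: (_ \in _)).
  rewrite integral_indic // setIT EFinD; apply: leeD; first by rewrite -pE.
  rewrite integral_cst // le_eqVlt; apply/orP; left; apply/eqP.
  rewrite -[RHS]mule1; congr (_ * _)%E; exact: probability_setT.
have I0 : (0 <= I)%E by apply: integral_ge0 => w _; rewrite lee_fin expR_ge0.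
have Ifin : I \is a fin_num.
  by rewrite fin_numE; apply/andP; split; [apply: contraTneq I0 => -> | apply: contraTneq Ib => ->].
set i := fine I.
have IE : I = i%:E by rewrite /i fineK.
have i0 : 0 <= i by rewrite -lee_fin -IE.
have ipb : i <= p + b by rewrite -lee_fin -IE.
move: Fe; rewrite -/I IE /elog.
case: ifP => ipos; last first.
  by rewrite muleC gt0_mulNye ?lte_fin ?invr_gt0.
rewrite -EFinM lte_fin => Fe.
have Hln : - (s + et) * q < ln i.
  have qk : q^-1 * q = 1 by rewrite mulVf // lt0r_neq0.
  have k0 : 0 < q^-1 by rewrite invr_gt0.
  set k := q^-1 in qk k0 Fe; set li := ln i in Fe *.
  nra.
have pb : b < p.
  rewrite ltNge; apply/negP => pleb.
  have : ln i <= ln 2 + ln b.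
    rewrite -lnM ?posrE //; rewrite ler_ln ?posrE ?mulr_gt0 //; lra.
  rewrite /b expRK /M => H.
  nra.
have ppos : 0 < p by lra.
have Hlnp : - (s + 2 * et) * q < ln p.
  have : ln i <= ln 2 + ln p.
    rewrite -lnM ?posrE //; rewrite ler_ln ?posrE ?mulr_gt0 //; lra.
  nra.
have Hj := sq_le_int (Phat eps) (Hhat eps eps0).1.
have setE : [set w | (exit_time nH T L (eta_of h Xe xstar eps w) <= T%:E)%E] = Ee.
  apply/seteqP; split => w /=; last by case.
  by move=> H; split => //; exact: Ceta.
have E1 : (\int[Pbar]_w (Phat eps w)%:E)%E = p%:E.
  rewrite -pE -setE -(Hhat eps eps0).2; by rewrite unlock.
have Ha : ((p ^+ 2)%:E <= \int[Pbar]_w ((Phat eps w) ^+ 2)%:E)%E.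
  by move: Hj; rewrite E1 -EFin_expe.
rewrite /F -/q.
move: Ha; case: (\int[Pbar]_w ((Phat eps w) ^+ 2)%:E)%E => [a'| |] Ha.
- have a'0 : 0 < a' by apply: lt_le_trans (_ : 0 < p ^+ 2) _; rewrite ?exprn_gt0 // -lee_fin.
  rewrite /elog a'0 -EFinM -EFinN lee_fin.
  have : 2 * ln p <= ln a'.
    rewrite mulr_natl -lnXn // ler_ln ?posrE ?exprn_gt0 //; by rewrite -lee_fin.
  have qk : q^-1 * q = 1 by rewrite mulVf // lt0r_neq0.
  have k0 : 0 < q^-1 by rewrite invr_gt0.
  set k := q^-1 in qk k0 *; set la := ln a'; set lp := ln p in Hlnp *.
  have etE : 4 * et = r - s by rewrite /et; field.
  move=> H; nra.
- by rewrite /elog muleC gt0_mulye ?lte_fin ?invr_gt0 // leNye.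
- by move: Ha; rewrite leeNy_eq.
Unshelve. all: by end_near.
Qed.
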